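(* Let $n\ge 5$ and let $\sigma$ be a maximal simplex of $\Delta_n$ that covers all places, and suppose $|N(w)\cap\sigma|\ge 2$ for all $w\in\sigma$. If there exists $v\in\sigma$ with $|N(v)\cap\sigma|\ge 3$, then $N(v)\subseteq\sigma$.
   Context: $\mathbb{I}_n$ is the $n$-dimensional hypercube graph on vertex set $\{0,1\}^n$ (adjacent iff differing in exactly one coordinate), with Hamming distance $d(v,w)=\#\{i: v(i)\ne w(i)\}$, $v(i)$ the $i$-th coordinate. $\Delta_n=\mathcal{VR}(\mathbb{I}_n;3)$ is the simplicial complex whose simplices are the subsets $\sigma\subseteq\{0,1\}^n$ with $d(x,y)\le 3$ for all $x,y\in\sigma$. A simplex $\sigma$ covers all places if for each $i\in[n]=\{1,\dots,n\}$ there are $v,w\in\sigma$ with $v(i)=1$ and $w(i)=0$. $N(v)$ denotes the set of the $n$ vertices adjacent to $v$ in $\mathbb{I}_n$. *)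

(* Defs.v *)
From mathcomp Require Import all_boot.
Set Implicit Arguments. Unset Strict Implicit. Unset Printing Implicit Defensive.

(* Vertices of the hypercube I_n: functions [n] -> {0,1}, coordinates indexed by 'I_n. *)
Definition cube (n : nat) := {ffun 'I_n -> bool}.

Definition hdist n (v w : cube n) : nat := #|[set i | v i != w i]|.

Definition adj n (v w : cube n) : bool := hdist v w == 1.

Definition nbhd n (v : cube n) : {set cube n} := [set w | adj v w].

(* simplices of Delta_n = VR(I_n; 3) *)
Definition is_simplex n (s : {set cube n}) : bool :=
  [forall x in s, forall y in s, hdist x y <= 3].

Definition maximal_simplex n (s : {set cube n}) : bool :=
  is_simplex s && [forall t : {set cube n}, (s \proper t) ==> ~~ is_simplex t].

Definition covers_all_places n (s : {set cube n}) : bool :=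
  [forall i : 'I_n, [exists v in s, v i] && [exists w in s, ~~ w i]].

(* Main.v *)
Require Import Defs.
From mathcomp Require Import all_boot.
From mathcomp Require Import zify.
Set Implicit Arguments. Unset Strict Implicit. Unset Printing Implicit Defensive.

Definition diff n (v w : cube n) : {set 'I_n} := [set i | v i != w i].
Definition sd (T : finType) (A B : {set T}) := (A :\: B) :|: (B :\: A).
Definition flip n (v : cube n) (a : 'I_n) : cube n :=
  [ffun i => if i == a then ~~ v i else v i].

Lemma hdistE n (v w : cube n) : hdist v w = #|diff v w|. Proof. by []. Qed.

Lemma diffC n (v w : cube n) : diff v w = diff w v.
Proof. by apply/setP=> i; rewrite !inE eq_sym. Qed.

Lemma diffvv n (v : cube n) : diff v v = set0.
Proof. by apply/setP=> i; rewrite !inE eqxx. Qed.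

Lemma diff_trans n (u v w : cube n) : diff u w = sd (diff u v) (diff v w).
Proof. apply/setP=> i; rewrite !inE; by case: (u i); case: (v i); case: (w i). Qed.

Lemma sdC (T : finType) (A B : {set T}) : sd A B = sd B A.
Proof. by rewrite /sd setUC. Qed.

Lemma card_sd (T : finType) (A B : {set T}) :
  #|sd A B| + 2 * #|A :&: B| = #|A| + #|B|.
Proof.
rewrite /sd cardsU.
have -> : (A :\: B) :&: (B :\: A) = set0.
  by apply/setP=> i; rewrite !inE; case: (i \in A); case: (i \in B).
rewrite cards0 subn0.
have h1 := cardsID B A; have h2 := cardsID A B; rewrite setIC in h2.
lia.
Qed.

Lemma card_sd1 (T : finType) (a : T) (B : {set T}) :
  #|sd [set a] B| = if a \in B then #|B| - 1 else #|B| + 1.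
Proof.
have := card_sd [set a] B; rewrite cards1.
case: ifP => aB.
- have -> : [set a] :&: B = [set a].
    by apply/setP=> i; rewrite !inE; case: eqP => [->|]; rewrite ?aB.
  rewrite cards1. lia.
- have -> : [set a] :&: B = set0.
    by apply/setP=> i; rewrite !inE; case: eqP => [->|]; rewrite ?aB.
  rewrite cards0. lia.
Qed.

Lemma tri n (u v w : cube n) : hdist u w <= hdist u v + hdist v w.
Proof.
rewrite !hdistE (diff_trans u v w); have := card_sd (diff u v) (diff v w); lia.
Qed.

Lemma diff_flip n (v : cube n) a : diff v (flip v a) = [set a].
Proof. apply/setP=> i; rewrite !inE ffunE; case: (i == a); by case: (v i). Qed.

Lemma flip_diff n (v u : cube n) a : diff v u = [set a] -> u = flip v a.
Proof.
move=> H; apply/ffunP=> i; rewrite ffunE.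
have Hi : (i \in diff v u) = (i \in [set a]) by rewrite H.
move: Hi; rewrite !inE.
case: (i == a); case: (u i); by case: (v i).
Qed.

Lemma flip_inj n (v : cube n) : injective (flip v).
Proof.
move=> a b E; have := diff_flip v a; rewrite E diff_flip => /set1_inj ->. by [].
Qed.

Lemma nbhdP n (v u : cube n) : u \in nbhd v -> exists a, u = flip v a.
Proof. rewrite inE /adj hdistE => /cards1P [a Ha]; exists a; exact: flip_diff. Qed.

Lemma sdist n (s : {set cube n}) x y :
  is_simplex s -> x \in s -> y \in s -> hdist x y <= 3.
Proof. move=> /forall_inP H xs ys; exact: (forall_inP (H x xs) y ys). Qed.

Lemma max_in n (s : {set cube n}) u : maximal_simplex s ->
  (forall x, x \in s -> hdist u x <= 3) -> u \in s.
Proof.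
move=> /andP[Hs /forallP Hm] Hu; apply/negPn/negP => nu.
have /implyP Hp := Hm (u |: s).
have : is_simplex (u |: s).
  apply/forall_inP => x /setU1P [->|xs]; apply/forall_inP => y /setU1P [->|ys].
  - by rewrite hdistE diffvv cards0.
  - exact: Hu.
  - by rewrite hdistE diffC -hdistE; apply: Hu.
  - exact: sdist Hs xs ys.
apply/negP; apply: Hp. rewrite properE subsetUr /=.
apply/negP => /subsetP H; move/negP: nu; apply; apply: H; exact: setU11.
Qed.

Lemma le2 n (s : {set cube n}) v : 3 < n -> is_simplex s -> covers_all_places s ->
  (forall w, w \in s -> 2 <= #|nbhd w :&: s|) -> v \in s -> 3 <= #|nbhd v :&: s| ->
  forall x, x \in s -> hdist v x <= 2.
Proof.
move=> n3 Hs Hc Hw vs Hv x xs.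
rewrite leqNgt; apply/negP => hx.
have cD : #|diff v x| = 3 by have := sdist Hs vs xs; rewrite hdistE in hx *; lia.
have inD : forall a, flip v a \in s -> a \in diff v x.
  move=> a fs; apply/negPn/negP => aD.
  have := sdist Hs fs xs.
  by rewrite hdistE (diff_trans _ v) diffC diff_flip card_sd1 (negbTE aD) cD.
have allD : forall a, a \in diff v x -> flip v a \in s.
  have sub : nbhd v :&: s \subset flip v @: diff v x.
    apply/subsetP => u; rewrite inE => /andP[/nbhdP [a ->] fs].
    by apply/imsetP; exists a => //; exact: inD.
  have eq : nbhd v :&: s = flip v @: diff v x.
    apply/eqP; rewrite eqEcard sub /= card_imset; last exact: flip_inj.
    by rewrite cD.
  move=> a aD; have : flip v a \in nbhd v :&: s by rewrite eq; apply/imsetP; exists a.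
  by rewrite inE => /andP[].
have /subsetPn [d _ dD] : ~~ ([set: 'I_n] \subset diff v x).
  apply/negP => /subset_leq_card; rewrite cardsT card_ord cD; lia.
have [w ws wd] : exists2 w, w \in s & d \in diff v w.
  move/forallP: Hc => /(_ d) /andP [/exists_inP [w1 w1s w1d] /exists_inP [w2 w2s w2d]].
  case vd: (v d).
  - by exists w2 => //; rewrite inE vd (negbTE w2d).
  - by exists w1 => //; rewrite inE vd w1d.
have C : forall y, y \in s -> d \in diff v y -> #|diff v y| = 2.
  move=> y ys dy.
  have h1 : #|diff v y| <= 3 := sdist Hs vs ys.
  have h2 := sdist Hs ys xs.
  rewrite hdistE (diff_trans y v x) diffC in h2.
  have h4 := card_sd (diff v y) (diff v x).
  have h3 : #|diff v y :&: diff v x| < #|diff v y|.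
    apply: proper_card. rewrite properE subsetIl /=.
    apply/subsetPn; exists d => //. by rewrite inE (negbTE dD) andbF.
  have h5 : 0 < #|diff v y| by apply/card_gt0P; exists d.
  case: (#|diff v y| =P 3) => [e3|ne3]; last by lia.
  have /subsetPn [a aD aY] : ~~ (diff v x \subset diff v y).
    apply/negP => sub. move: h4 h3; rewrite (setIidPr sub). lia.
  have := sdist Hs (allD a aD) ys.
  by rewrite hdistE (diff_trans _ v y) diffC diff_flip card_sd1 (negbTE aY) e3.
have W2 := C w ws wd.
have : nbhd w :&: s \subset [set flip w d].
  apply/subsetP => u; rewrite inE => /andP [/nbhdP [z ->] us].
  rewrite inE; apply/eqP; congr flip.
  apply/eqP; apply/negPn/negP => zd.
  have dz : d \in diff v (flip w z).
    by rewrite (diff_trans v w) diff_flip /sd in_setU !in_setD wd in_set1 eq_sym (negbTE zd).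
  have := C _ us dz; rewrite (diff_trans v w) diff_flip sdC card_sd1 W2.
  by case: ifP.
move/subset_leq_card; rewrite cards1. have := Hw w ws. lia.
Qed.

Theorem mainTheorem10 (n : nat) (s : {set cube n}) :
  5 <= n ->
  maximal_simplex s ->
  covers_all_places s ->
  (forall w, w \in s -> 2 <= #|nbhd w :&: s|) ->
  forall v, v \in s -> 3 <= #|nbhd v :&: s| -> nbhd v \subset s.
Proof.
move=> n5 Hm Hc Hw v vs Hv.
have Hs : is_simplex s by case/andP: Hm.
apply/subsetP => u un. apply: max_in Hm _ => x xs.
have huv : hdist u v = 1.
  by move: un; rewrite inE /adj hdistE diffC => /eqP.
have := tri u v x; have := le2 (ltn_trans (isT : 3 < 4) n5) Hs Hc Hw vs Hv xs.
lia.
Qed.
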